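(* Let $p,q\in\mathbb{C}$, let $K\in\mathbb{C}^{N\times N}$ be a constant matrix and $c=(c_1,\dots,c_N)$ a constant row vector. Let $r(n,m)=(\rho_1(n,m),\dots,\rho_N(n,m))^T$ and $M(n,m)\in\mathbb{C}^{N\times N}$ be functions on $\mathbb{Z}^2$ such that, for all $(n,m)$, $$(pI-K)\tilde r=(pI+K)r,\qquad (qI-K)\hat r=(qI+K)r,\qquad MK+KM=r\,c,$$ and $I+M(n,m)$ is invertible for all $(n,m)$. Let $a,b\in\mathbb{C}$, and assume $sI\pm K$ is invertible for $s\in\{0,p,q,a,b\}$ and the eigenvalues $k_1,\dots,k_N$ of $K$ (with multiplicity) satisfy $k_i+k_j\ne0$ for all $i,j$. For $i,j\in\mathbb{Z}$ define $S^{(i,j)}=c\,K^j(I+M)^{-1}K^i r$. Then for all $i,j\in\mathbb{Z}$: $$p\tilde S^{(i,j)}-\tilde S^{(i,j+1)}=pS^{(i,j)}+S^{(i+1,j)}-\tilde S^{(i,0)}S^{(0,j)},$$ $$pS^{(i,j)}+S^{(i,j+1)}=p\tilde S^{(i,j)}-\tilde S^{(i+1,j)}+S^{(i,0)}\tilde S^{(0,j)},$$ $$q\hat S^{(i,j)}-\hat S^{(i,j+1)}=qS^{(i,j)}+S^{(i+1,j)}-\hat S^{(i,0)}S^{(0,j)},$$ $$qS^{(i,j)}+S^{(i,j+1)}=q\hat S^{(i,j)}-\hat S^{(i+1,j)}+S^{(i,0)}\hat S^{(0,j)}.$$ Moreover, define $S(a,b)=c\,(bI+K)^{-1}(I+M)^{-1}(aI+K)^{-1}r$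 and $V(a)=1-c\,(I+M)^{-1}(aI+K)^{-1}r$ (and similarly $V(b)$, $S(b,a)$). If $S^{(i,j)}=S^{(j,i)}$ for all $i,j$, then $S(a,b)=S(b,a)$, $V(a)=1-c\,(aI+K)^{-1}(I+M)^{-1}r$, and $$1-(p+b)\tilde S(a,b)+(p-a)S(a,b)=\tilde V(a)V(b),\qquad 1-(q+b)\hat S(a,b)+(q-a)S(a,b)=\hat V(a)V(b),$$ $$1-(p+a)\tilde S(a,b)+(p-b)S(a,b)=\tilde V(b)V(a),\qquad 1-(q+a)\hat S(a,b)+(q-b)S(a,b)=\hat V(b)V(a).$$
   Context: For a function $f$ on $\mathbb{Z}^2$, $\tilde f(n,m)=f(n+1,m)$ and $\hat f(n,m)=f(n,m+1)$. $I$ is the $N\times N$ identity matrix. The symmetry $S(a,b)=S(b,a)$ and the identities for $S(a,b),V$ are to be understood for all $a,b$ with $aI+K$, $bI+K$ invertible (the symmetry argument uses the formal expansion $S(a,b)=\sum_{i,j\ge0}(-1)^{i+j}a^{-i-1}b^{-j-1}S^{(i,j)}$). *)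

(* Defs.v *)
(* The complex field C is generalized to an arbitrary
   numClosedFieldType (algebraically closed field of char 0 with conjugation;
   e.g. algC, and C itself). *)
From HB Require Import structures.
From mathcomp Require Import all_boot all_order all_algebra.
Set Implicit Arguments. Unset Strict Implicit. Unset Printing Implicit Defensive.
Import Order.TTheory GRing.Theory Num.Theory.
Local Open Scope ring_scope.

Section Defs.
Variables (C : numClosedFieldType) (N : nat).

(* natural power of a square matrix, via mulmx (works for every N, incl. 0) *)
Definition mxpown (A : 'M[C]_N) (k : nat) : 'M[C]_N := iter k (mulmx A) 1%:M.

Definition mxpowz (A : 'M[C]_N) (j : int) : 'M[C]_N :=
  match j with
  | Posz k => mxpown A k
  | Negz k => mxpown (invmx A) k.+1
  end.

Definition sc (x : 'M[C]_1) : C := x ord0 ord0.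

Definition Sij (K : 'M[C]_N) (c : 'rV[C]_N) (r : int -> int -> 'cV[C]_N)
  (M : int -> int -> 'M[C]_N) (i j : int) (n m : int) : C :=
  sc (c *m mxpowz K j *m invmx (1%:M + M n m) *m mxpowz K i *m r n m).

Definition Sab (K : 'M[C]_N) (c : 'rV[C]_N) (r : int -> int -> 'cV[C]_N)
  (M : int -> int -> 'M[C]_N) (a b : C) (n m : int) : C :=
  sc (c *m invmx (b%:M + K) *m invmx (1%:M + M n m) *m invmx (a%:M + K) *m r n m).

Definition Va (K : 'M[C]_N) (c : 'rV[C]_N) (r : int -> int -> 'cV[C]_N)
  (M : int -> int -> 'M[C]_N) (a : C) (n m : int) : C :=
  1 - sc (c *m invmx (1%:M + M n m) *m invmx (a%:M + K) *m r n m).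

End Defs.

(* Main.v *)
Require Import Defs.
From HB Require Import structures.
From mathcomp Require Import all_boot all_order all_algebra.
From mathcomp Require Import ring zify.
Import Order.TTheory GRing.Theory Num.Theory.
Set Implicit Arguments. Unset Strict Implicit. Unset Printing Implicit Defensive.
Local Open Scope ring_scope.

Ltac mxexp := repeat progress rewrite ?mulmxBl ?mulmxBr ?mulmxDl ?mulmxDr ?mulmxN ?mulNmx
   ?mul_scalar_mx ?mul_mx_scalar ?mulmx1 ?mul1mx -?scalemxAl -?scalemxAr ?mulmxA.
Ltac mxnorm := mxexp; apply/matrixP => ? ?; rewrite !mxE; ring.

Section S.
Variable C : numClosedFieldType.


Lemma notev_unit N (K : 'M[C]_N) w : ~~ eigenvalue K w -> (K - w%:M) \in unitmx.
Proof. by rewrite /eigenvalue /eigenspace negbK kermx_eq0 row_free_unit. Qed.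

Lemma unit_notev N (K : 'M[C]_N) w : (K - w%:M) \in unitmx -> ~~ eigenvalue K w.
Proof. by rewrite /eigenvalue /eigenspace negbK kermx_eq0 row_free_unit. Qed.

Lemma comm_horner n (K X : 'M[C]_n.+1) : X *m K = - (K *m X) ->
  forall f, X *m horner_mx K f = horner_mx (- K) f *m X.
Proof.
move=> XK; elim/poly_ind => [|f a IH]; first by rewrite !rmorph0 mulmx0 mul0mx.
rewrite !rmorphD !rmorphM /= !horner_mx_X !horner_mx_C -!mulmxE.
rewrite mulmxDr mulmxDl mulmxA IH -(mulmxA _ X K) XK scalar_mxC.
by rewrite mulmxN mulmxA mulmxN mulNmx.
Qed.

Lemma sylv_inj N (K : 'M[C]_N)
  (Heig : forall x y : C, eigenvalue K x -> eigenvalue K y -> x + y != 0) X :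
  X *m K + K *m X = 0 -> X = 0.
Proof.
case: N K X Heig => [|n] K X Heig H; first by rewrite [X]thinmx0.
have XK : X *m K = - (K *m X) by apply/eqP; rewrite -addr_eq0 H.
have CH := Cayley_Hamilton K.
have := comm_horner XK (char_poly K); rewrite CH mulmx0 => /esym E.
have [s Hs] := closed_field_poly_normal (char_poly K).
have Hu : horner_mx (- K) (char_poly K) \in unitmx.
  rewrite Hs (monicP (char_poly_monic K)) scale1r rmorph_prod /= big_seq.
  apply: (big_ind (fun A => A \in unitmx)); first exact: unitmx1.
    by move=> A B uA uB; rewrite -mulmxE unitmx_mul uA uB.
  move=> z zs; rewrite rmorphB /= horner_mx_X horner_mx_C.
  have ez : eigenvalue K z.
    by rewrite eigenvalue_root_char Hs (monicP (char_poly_monic K)) scale1r root_prod_XsubC.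
  have nez : ~~ eigenvalue K (- z).
    apply/negP => ez'; have := Heig _ _ ez ez'; by rewrite subrr eqxx.
  have := notev_unit nez; rewrite -(unitmxZ _ (unitrN1 C)).
  by rewrite scaleN1r raddfN /= opprB addrC.
by rewrite -(mulKmx Hu X) E mulmx0.
Qed.



Lemma mxpown_exp n (K : 'M[C]_n.+1) k : mxpown K k = K ^+ k.
Proof.
elim: k => [|k IH]; first by rewrite expr0.
by rewrite exprS /mxpown /= -/(mxpown K k) IH mulmxE.
Qed.

Lemma horner_sum n (K : 'M[C]_n.+1) g :
  horner_mx K g = \sum_(i < size g) g`_i *: K ^+ i.
Proof.
rewrite -{1}[g]coefK poly_def rmorph_sum /=; apply: eq_bigr => i _.
by rewrite -mul_polyC rmorphM /= horner_mx_C rmorphXn /= horner_mx_X -mulmxE mul_scalar_mx.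
Qed.

Lemma sc_bilin N (c : 'rV[C]_N) (U : 'M[C]_N) (r : 'cV[C]_N) k l
  (a : 'I_k -> C) (b : 'I_l -> C) (X : 'I_k -> 'M[C]_N) (Y : 'I_l -> 'M[C]_N) :
  sc (c *m (\sum_(i < k) a i *: X i) *m U *m (\sum_(j < l) b j *: Y j) *m r)
  = \sum_(i < k) \sum_(j < l) a i * b j * sc (c *m X i *m U *m Y j *m r).
Proof.
rewrite mulmx_sumr !mulmx_suml /sc summxE [RHS]exchange_big /=.
apply: eq_bigr => j _.
rewrite -!scalemxAr -!scalemxAl !mulmx_sumr !mulmx_suml.
rewrite mxE summxE big_distrr /=; apply: eq_bigr => i _.
rewrite -!scalemxAr -!scalemxAl !mxE. ring.
Qed.

Lemma horner_sym n (K : 'M[C]_n.+1) c U r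
  (Hs : forall i j : nat, sc (c *m K ^+ j *m U *m K ^+ i *m r) = sc (c *m K ^+ i *m U *m K ^+ j *m r))
  f g : sc (c *m horner_mx K f *m U *m horner_mx K g *m r) =
        sc (c *m horner_mx K g *m U *m horner_mx K f *m r).
Proof.
rewrite !horner_sum !sc_bilin exchange_big /=; apply: eq_bigr => i _.
apply: eq_bigr => j _; rewrite Hs; ring.
Qed.

Lemma horner_T n (K : 'M[C]_n.+1) a h : exists g, horner_mx (a%:M + K) h = horner_mx K g.
Proof.
elim/poly_ind: h => [|h x [g IH]]; first by exists 0; rewrite !rmorph0.
exists (g * ('X + a%:P) + x%:P).
rewrite !rmorphD !rmorphM /= IH !horner_mx_X !horner_mx_C !rmorphD /= horner_mx_X horner_mx_C.
by rewrite [K + _]addrC.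
Qed.

Lemma inv_poly n (K : 'M[C]_n.+1) a (Ha : (a%:M + K) \in unitmx) :
  exists g, invmx (a%:M + K) = horner_mx K g.
Proof.
set T := a%:M + K.
set f := char_poly T.
have nr : ~~ root f 0.
  rewrite -eigenvalue_root_char; apply: unit_notev.
  by rewrite (_ : 0%:M = 0) ?subr0 //; apply/matrixP => i j; rewrite !mxE mul0rn.
have : root (f - (f.[0])%:P) 0 by rewrite /root hornerD hornerN hornerC subrr.
case/factor_theorem => q Hq.
have Hf : f = q * 'X + (f.[0])%:P by apply/eqP; rewrite -subr_eq Hq polyC0 subr0.
have E : horner_mx T q *m T = (- f.[0]) *: 1%:M.
  have := Cayley_Hamilton T; rewrite -/f {1}Hf rmorphD rmorphM /= horner_mx_X horner_mx_C.
  by move/eqP; rewrite addr_eq0 -mulmxE => /eqP ->; rewrite scaleNr scalemx1.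
have f0 : - f.[0] != 0 by rewrite oppr_eq0.
have [g Hg] := horner_T K a q.
exists ((- f.[0])^-1 *: g); rewrite linearZ /= -Hg.
have := congr1 (fun X => X *m invmx T) E.
rewrite -mulmxA mulmxV // mulmx1 -scalemxAl mul1mx => ->.
by rewrite scalerA mulVf // scale1r.
Qed.


Lemma scD (x y : 'M[C]_1) : sc (x + y) = sc x + sc y. Proof. by rewrite /sc mxE. Qed.
Lemma scB (x y : 'M[C]_1) : sc (x - y) = sc x - sc y. Proof. by rewrite /sc !mxE. Qed.
Lemma scN (x : 'M[C]_1) : sc (- x) = - sc x. Proof. by rewrite /sc mxE. Qed.
Lemma scZ a (x : 'M[C]_1) : sc (a *: x) = a * sc x. Proof. by rewrite /sc mxE. Qed.
Lemma scM (x y : 'M[C]_1) : sc (x *m y) = sc x * sc y.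
Proof. by rewrite /sc mxE big_ord1. Qed.
Lemma mx1C (x y : 'M[C]_1) : x *m y = y *m x.
Proof. by apply/matrixP => i j; rewrite !ord1 !mxE !big_ord1 mulrC. Qed.

Lemma sub0P N M (x y : 'M[C]_(N, M)) : x - y = 0 -> x = y.
Proof. by move/eqP; rewrite subr_eq0 => /eqP. Qed.

Lemma mxpown_comm N (A K : 'M[C]_N) : A *m K = K *m A ->
  forall k, mxpown A k *m K = K *m mxpown A k.
Proof.
move=> AK; elim=> [|k IH] /=; first by rewrite /mxpown /= mul1mx mulmx1.
by rewrite /mxpown /= -/(mxpown A k) -mulmxA IH !mulmxA AK.
Qed.

Lemma powz_comm N (K : 'M[C]_N) (HK : K \in unitmx) i :
  mxpowz K i *m K = K *m mxpowz K i.
Proof.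
case: i => k; first exact: mxpown_comm.
by apply: (mxpown_comm (A:=invmx K)); rewrite mulVmx // mulmxV.
Qed.

Lemma powzS N (K : 'M[C]_N) (HK : K \in unitmx) i :
  mxpowz K (i + 1) = mxpowz K i *m K.
Proof.
case: i => k.
  have -> : (Posz k + 1 = Posz k.+1)%R by lia.
  by rewrite /= /mxpown /= -/(mxpown K k) -(mxpown_comm (erefl _)).
case: k => [|k].
  have -> : (Negz 0 + 1 = 0)%R by [].
  by rewrite /= /mxpown /= mulmx1 mulVmx.
have -> : (Negz k.+1 + 1 = Negz k)%R by rewrite !NegzE; lia.
have KiK : invmx K *m K = K *m invmx K by rewrite mulVmx // mulmxV.
rewrite /= -!mulmxA (mxpown_comm KiK) [invmx K *m (K *m _)]mulmxA mulVmx //.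
by rewrite mul1mx.
Qed.

Lemma powz0 N (K : 'M[C]_N) : mxpowz K 0 = 1%:M.
Proof. by []. Qed.

Section Shift.
Variables (N : nat) (K : 'M[C]_N) (c : 'rV[C]_N) (r r' : 'cV[C]_N) (M M' : 'M[C]_N) (p : C).
Hypothesis Hinj : forall X, X *m K + K *m X = 0 -> X = 0.
Hypothesis Hr : (p%:M - K) *m r' = (p%:M + K) *m r.
Hypothesis HM : M *m K + K *m M = r *m c.
Hypothesis HM' : M' *m K + K *m M' = r' *m c.
Hypothesis HU : (1%:M + M) \in unitmx.
Hypothesis HU' : (1%:M + M') \in unitmx.
Local Notation U := (invmx (1%:M + M)).
Local Notation U' := (invmx (1%:M + M')).

Lemma R1 : (p%:M - K) *m M' - M *m (p%:M - K) = r *m c.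
Proof.
apply: sub0P; apply: Hinj.
transitivity ((p%:M - K) *m (M' *m K + K *m M') - (M *m K + K *m M) *m (p%:M - K)
   - (r *m c *m K + K *m (r *m c))); first by mxnorm.
rewrite HM HM' mulmxA Hr; mxnorm.
Qed.

Lemma R2 : M' *m (p%:M + K) - (p%:M + K) *m M = r' *m c.
Proof.
apply: sub0P; apply: Hinj.
transitivity ((M' *m K + K *m M') *m (p%:M + K) - (p%:M + K) *m (M *m K + K *m M)
   - (r' *m c *m K + K *m (r' *m c))); first by mxnorm.
rewrite HM HM' mulmxA -Hr; mxnorm.
Qed.

Lemma E1 : (p%:M - K) *m U' = U *m (p%:M - K) - U *m r *m c *m U'.
Proof.
have e : U *m ((p%:M - K) *m (1%:M + M') - (1%:M + M) *m (p%:M - K)) *m U'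
         = U *m (p%:M - K) - (p%:M - K) *m U'.
  rewrite mulmxBr mulmxBl -!mulmxA (mulmxV HU') mulmx1 !mulmxA (mulVmx HU) mul1mx //.
have e2 : (p%:M - K) *m (1%:M + M') - (1%:M + M) *m (p%:M - K) = r *m c.
  rewrite -R1; mxnorm.
rewrite e2 in e; rewrite -[U *m r *m c]mulmxA e.
by rewrite opprB addrCA subrr addr0.
Qed.

Lemma E2 : (p%:M + K) *m U = U' *m (p%:M + K) + U' *m r' *m c *m U.
Proof.
have e : U' *m ((1%:M + M') *m (p%:M + K) - (p%:M + K) *m (1%:M + M)) *m U
         = (p%:M + K) *m U - U' *m (p%:M + K).
  rewrite mulmxBr mulmxBl -!mulmxA (mulmxV HU) mulmx1 !mulmxA (mulVmx HU') mul1mx //.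
have e2 : (1%:M + M') *m (p%:M + K) - (p%:M + K) *m (1%:M + M) = r' *m c.
  rewrite -R2; mxnorm.
rewrite e2 in e; rewrite -[U' *m r' *m c]mulmxA e.
by rewrite addrCA subrr addr0.
Qed.
Hypothesis HK : K \in unitmx.
Local Notation P := (mxpowz K).

Lemma part1 (i j : int) :
 (p * sc (c *m P j *m U' *m P i *m r') - sc (c *m P (j + 1) *m U' *m P i *m r')
   = p * sc (c *m P j *m U *m P i *m r) + sc (c *m P j *m U *m P (i + 1) *m r)
     - sc (c *m P 0 *m U' *m P i *m r') * sc (c *m P j *m U *m P 0 *m r))
 /\ (p * sc (c *m P j *m U *m P i *m r) + sc (c *m P (j + 1) *m U *m P i *m r)
   = p * sc (c *m P j *m U' *m P i *m r') - sc (c *m P j *m U' *m P (i + 1) *m r')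
     + sc (c *m P 0 *m U *m P i *m r) * sc (c *m P j *m U' *m P 0 *m r')).
Proof.
rewrite !powzS // powz0.
set J := P j; set I := P i.
have Dc : forall s, (s%:M - K) *m I - I *m (s%:M - K) = 0.
  move=> s; apply/eqP; rewrite subr_eq0 mulmxBl mulmxBr -scalar_mxC /I powz_comm //.
have Dc2 : forall s, (s%:M + K) *m I - I *m (s%:M + K) = 0.
  move=> s; apply/eqP; rewrite subr_eq0 mulmxDl mulmxDr -scalar_mxC /I powz_comm //.
have Dr : (p%:M - K) *m r' - (p%:M + K) *m r = 0 by rewrite Hr subrr.
split; rewrite -?scM -?scZ; do 3 rewrite -?scD -?scB; congr sc; apply: sub0P.
  have DE : (p%:M - K) *m U' - (U *m (p%:M - K) - U *m r *m c *m U') = 0 by rewrite E1 subrr.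
  have Ds : (c *m U' *m I *m r') *m (c *m J *m U *m r) - (c *m J *m U *m r) *m (c *m U' *m I *m r') = 0.
    by rewrite mx1C subrr.
  transitivity (c *m J *m ((p%:M - K) *m U' - (U *m (p%:M - K) - U *m r *m c *m U')) *m I *m r'
    + c *m J *m U *m ((p%:M - K) *m I - I *m (p%:M - K)) *m r'
    + c *m J *m U *m I *m ((p%:M - K) *m r' - (p%:M + K) *m r)
    + ((c *m U' *m I *m r') *m (c *m J *m U *m r) - (c *m J *m U *m r) *m (c *m U' *m I *m r'))).
    by mxnorm.
  by rewrite DE Dc Dr Ds !mulmx0 !mul0mx !addr0.
have DE : (p%:M + K) *m U - (U' *m (p%:M + K) + U' *m r' *m c *m U) = 0 by rewrite E2 subrr.
have Ds : (c *m J *m U' *m r') *m (c *m U *m I *m r) - (c *m U *m I *m r) *m (c *m J *m U' *m r') = 0.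
  by rewrite mx1C subrr.
transitivity (c *m J *m ((p%:M + K) *m U - (U' *m (p%:M + K) + U' *m r' *m c *m U)) *m I *m r
  + c *m J *m U' *m ((p%:M + K) *m I - I *m (p%:M + K)) *m r
  - c *m J *m U' *m I *m ((p%:M - K) *m r' - (p%:M + K) *m r)
  + ((c *m J *m U' *m r') *m (c *m U *m I *m r) - (c *m U *m I *m r) *m (c *m J *m U' *m r'))).
  by mxnorm.
by rewrite DE Dc2 Dr Ds !mulmx0 !mul0mx subr0 !addr0.
Qed.

Lemma inv_comm (T : 'M[C]_N) : T \in unitmx -> T *m K = K *m T -> invmx T *m K = K *m invmx T.
Proof.
move=> uT TK.
by rewrite -[invmx T *m K]mulmx1 -(mulmxV uT) !mulmxA -[invmx T *m K *m T]mulmxA -TK mulmxA (mulVmx uT) mul1mx.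
Qed.

Lemma part2 a b (Ha : (a%:M + K) \in unitmx) (Hb : (b%:M + K) \in unitmx)
 (Hsym : sc (c *m U *m invmx (b%:M + K) *m r) = sc (c *m invmx (b%:M + K) *m U *m r)) :
 1 - (p + b) * sc (c *m invmx (b%:M + K) *m U' *m invmx (a%:M + K) *m r')
   + (p - a) * sc (c *m invmx (b%:M + K) *m U *m invmx (a%:M + K) *m r)
   = (1 - sc (c *m U' *m invmx (a%:M + K) *m r')) * (1 - sc (c *m U *m invmx (b%:M + K) *m r)).
Proof.
rewrite Hsym.
set A := invmx (a%:M + K); set B := invmx (b%:M + K).
have key : (p + b) *: (c *m B *m U' *m A *m r') = (p - a) *: (c *m B *m U *m A *m r)
   + c *m B *m U *m r - (c *m B *m U *m r) *m (c *m U' *m A *m r') + c *m U' *m A *m r'.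
  apply: sub0P.
  have DB : B *m (b%:M + K) - 1%:M = 0 by rewrite mulVmx // subrr.
  have DA : A *m (a%:M + K) - 1%:M = 0 by rewrite mulVmx // subrr.
  have DE : (p%:M - K) *m U' - (U *m (p%:M - K) - U *m r *m c *m U') = 0 by rewrite E1 subrr.
  have Dr : (p%:M - K) *m r' - (p%:M + K) *m r = 0 by rewrite Hr subrr.
  have AK : A *m K = K *m A.
    apply: inv_comm => //; rewrite mulmxDl mulmxDr scalar_mxC //.
  have Dc : (p%:M - K) *m A - A *m (p%:M - K) = 0.
    apply/eqP; rewrite subr_eq0 mulmxBl mulmxBr -scalar_mxC AK //.
  transitivity (c *m (B *m (b%:M + K) - 1%:M) *m U' *m A *m r'
     + c *m B *m ((p%:M - K) *m U' - (U *m (p%:M - K) - U *m r *m c *m U')) *m A *m r'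
     + c *m B *m U *m ((p%:M - K) *m A - A *m (p%:M - K)) *m r'
     + c *m B *m U *m A *m ((p%:M - K) *m r' - (p%:M + K) *m r)
     + c *m B *m U *m (A *m (a%:M + K) - 1%:M) *m r).
    by mxnorm.
  by rewrite DB DA DE Dr Dc !mulmx0 !mul0mx !addr0.
have := congr1 (@sc C) key; rewrite !(scD, scB, scN, scZ, scM) => ->; ring.
Qed.
End Shift.

Lemma symN N (K : 'M[C]_N) (c : 'rV[C]_N) (r : 'cV[C]_N) (U : 'M[C]_N)
  (Hs : forall i j : nat, sc (c *m mxpown K j *m U *m mxpown K i *m r)
                        = sc (c *m mxpown K i *m U *m mxpown K j *m r))
  a b (Ha : (a%:M + K) \in unitmx) (Hb : (b%:M + K) \in unitmx) :
  sc (c *m invmx (b%:M + K) *m U *m invmx (a%:M + K) *m r)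
    = sc (c *m invmx (a%:M + K) *m U *m invmx (b%:M + K) *m r)
  /\ sc (c *m U *m invmx (a%:M + K) *m r) = sc (c *m invmx (a%:M + K) *m U *m r).
Proof.
case: N K c r U Hs Ha Hb => [|n] K c r U Hs Ha Hb.
  by rewrite [c]thinmx0 !mul0mx.
have Hs' : forall i j : nat, sc (c *m K ^+ j *m U *m K ^+ i *m r) = sc (c *m K ^+ i *m U *m K ^+ j *m r).
  by move=> i j; rewrite -!mxpown_exp.
have [gA HA] := inv_poly Ha; have [gB HB] := inv_poly Hb.
split; first by rewrite HA HB horner_sym.
have e1 : c *m U = c *m horner_mx K 1 *m U by rewrite rmorph1 /= mulmx1.
have e2 : c *m invmx (a%:M + K) *m U *m r = c *m invmx (a%:M + K) *m U *m horner_mx K 1 *m r.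
  by rewrite rmorph1 /= mulmx1.
by rewrite e1 e2 HA horner_sym.
Qed.
End S.

Theorem theorem1 (C : numClosedFieldType) (N : nat) (p q a b : C)
  (K : 'M[C]_N) (c : 'rV[C]_N)
  (r : int -> int -> 'cV[C]_N) (M : int -> int -> 'M[C]_N)
  (Hr1 : forall n m : int, (p%:M - K) *m r (n + 1) m = (p%:M + K) *m r n m)
  (Hr2 : forall n m : int, (q%:M - K) *m r n (m + 1) = (q%:M + K) *m r n m)
  (HM : forall n m : int, M n m *m K + K *m M n m = r n m *m c)
  (HIM : forall n m : int, (1%:M + M n m) \in unitmx)
  (Hinv : forall s : C, s \in [:: 0; p; q; a; b] ->
            ((s%:M + K) \in unitmx) /\ ((s%:M - K) \in unitmx))
  (Heig : forall x y : C, eigenvalue K x -> eigenvalue K y -> x + y != 0) :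
  let S := Sij K c r M in
  let Sab' := Sab K c r M in
  let V := Va K c r M in
  (forall (i j n m : int),
     p * S i j (n + 1) m - S i (j + 1) (n + 1) m
       = p * S i j n m + S (i + 1) j n m - S i 0 (n + 1) m * S 0 j n m
   /\ p * S i j n m + S i (j + 1) n m
       = p * S i j (n + 1) m - S (i + 1) j (n + 1) m + S i 0 n m * S 0 j (n + 1) m
   /\ q * S i j n (m + 1) - S i (j + 1) n (m + 1)
       = q * S i j n m + S (i + 1) j n m - S i 0 n (m + 1) * S 0 j n m
   /\ q * S i j n m + S i (j + 1) n m
       = q * S i j n (m + 1) - S (i + 1) j n (m + 1) + S i 0 n m * S 0 j n (m + 1))
  /\
  ((forall (i j n m : int), S i j n m = S j i n m) ->
   forall n m : int,
     Sab' a b n m = Sab' b a n m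
   /\ V a n m = 1 - sc (c *m invmx (a%:M + K) *m invmx (1%:M + M n m) *m r n m)
   /\ 1 - (p + b) * Sab' a b (n + 1) m + (p - a) * Sab' a b n m
        = V a (n + 1) m * V b n m
   /\ 1 - (q + b) * Sab' a b n (m + 1) + (q - a) * Sab' a b n m
        = V a n (m + 1) * V b n m
   /\ 1 - (p + a) * Sab' a b (n + 1) m + (p - b) * Sab' a b n m
        = V b (n + 1) m * V a n m
   /\ 1 - (q + a) * Sab' a b n (m + 1) + (q - b) * Sab' a b n m
        = V b n (m + 1) * V a n m).
Proof.
move=> S Sab' V.
have HK : K \in unitmx.
  have h0 : (0:C) \in [:: 0; p; q; a; b] by rewrite inE eqxx.
  have := (Hinv 0 h0).1.
  by rewrite (_ : 0%:M = 0) ?add0r //; apply/matrixP => i j; rewrite !mxE mul0rn.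
have Hinj := sylv_inj Heig.
have Ha : (a%:M + K) \in unitmx by apply: (Hinv a _).1; rewrite !inE eqxx !orbT.
have Hb : (b%:M + K) \in unitmx by apply: (Hinv b _).1; rewrite !inE eqxx !orbT.
split.
  move=> i j n m.
  have [h1 h2] := part1 Hinj (Hr1 n m) (HM n m) (HM (n + 1) m) (HIM n m) (HIM (n + 1) m) HK i j.
  have [h3 h4] := part1 Hinj (Hr2 n m) (HM n m) (HM n (m + 1)) (HIM n m) (HIM n (m + 1)) HK i j.
  by rewrite /S /Sij; split; [|split; [|split]].
move=> Hsym.
have sy : forall n m, sc (c *m invmx (b%:M + K) *m invmx (1%:M + M n m) *m invmx (a%:M + K) *m r n m)
    = sc (c *m invmx (a%:M + K) *m invmx (1%:M + M n m) *m invmx (b%:M + K) *m r n m)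
  /\ (forall s, (s%:M + K) \in unitmx -> sc (c *m invmx (1%:M + M n m) *m invmx (s%:M + K) *m r n m)
       = sc (c *m invmx (s%:M + K) *m invmx (1%:M + M n m) *m r n m)).
  move=> n m; have Hs : forall i j : nat, sc (c *m mxpown K j *m invmx (1%:M + M n m) *m mxpown K i *m r n m)
                        = sc (c *m mxpown K i *m invmx (1%:M + M n m) *m mxpown K j *m r n m).
    by move=> i j; exact: (Hsym (Posz i) (Posz j) n m).
  split; first exact: (symN Hs Ha Hb).1.
  by move=> s Hs'; exact: (symN Hs Hs' Hs').2.
move=> n m.
have [sab1 _] := sy n m; have [sab2 _] := sy (n + 1) m; have [sab3 _] := sy n (m + 1).
have vb := (sy n m).2 b Hb; have va := (sy n m).2 a Ha.
rewrite /Sab' /V /Sab /Va.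
split; first exact: sab1.
split; first by rewrite va.
split; first exact: (part2 Hinj (Hr1 n m) (HM n m) (HM (n + 1) m) (HIM n m) (HIM (n + 1) m) Ha Hb vb).
split; first exact: (part2 Hinj (Hr2 n m) (HM n m) (HM n (m + 1)) (HIM n m) (HIM n (m + 1)) Ha Hb vb).
split; rewrite sab1.
  by rewrite sab2; exact: (part2 Hinj (Hr1 n m) (HM n m) (HM (n + 1) m) (HIM n m) (HIM (n + 1) m) Hb Ha va).
by rewrite sab3; exact: (part2 Hinj (Hr2 n m) (HM n m) (HM n (m + 1)) (HIM n m) (HIM n (m + 1)) Hb Ha va).
Qed.
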